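(* On $\mathbb{C}^2\otimes\mathbb{C}^2$ let $|\Phi^\pm\rangle=(|00\rangle\pm|11\rangle)/\sqrt2$, and for $\alpha,\beta\in(0,1)$ let $\sigma_1=\alpha|\Phi^+\rangle\langle\Phi^+|+(1-\alpha)|01\rangle\langle01|$ and $\sigma_2=\beta|\Phi^-\rangle\langle\Phi^-|+(1-\beta)|10\rangle\langle10|$, with supports $s_1=\mathrm{span}\{|\Phi^+\rangle,|01\rangle\}$ and $s_2=\mathrm{span}\{|\Phi^-\rangle,|10\rangle\}$. Then any two unit vectors $|\psi_1\rangle\in s_1$, $|\psi_2\rangle\in s_2$ are perfectly distinguishable by LOCC, but $\{\sigma_1,\sigma_2\}$ is not perfectly distinguishable by LOCC (indeed not even by any separable POVM).
   Context: The two parties hold the two qubits. A set of states is perfectly distinguishable by LOCC if there is an LOCC protocol identifying the state with probability $1$; equivalently there is an LOCC-implementable POVM $\{\Pi_i\}$ with $\mathrm{Tr}(\Pi_i\sigma_j)=\delta_{ij}$. A separable POVM is one whose elements are nonnegative combinations of tensor products of positive semidefinite operators on the two qubits. The support of a density matrix is the span of its eigenvectors with nonzero eigenvalues. *)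

(* Defs.v *)
(* Two-qubit quantum states over an arbitrary
   numClosedFieldType C (the complex numbers being the intended model). *)
From HB Require Import structures.
From mathcomp Require Import all_boot all_order all_algebra.
Set Implicit Arguments. Unset Strict Implicit. Unset Printing Implicit Defensive.
Import Order.TTheory GRing.Theory Num.Theory.
Local Open Scope ring_scope.

Definition adj (C : numClosedFieldType) m n (A : 'M[C]_(m, n)) : 'M[C]_(n, m) :=
  (map_mx Num.conj A)^T.

Definition psd (C : numClosedFieldType) n (A : 'M[C]_n) : Prop :=
  adj A = A /\ forall v : 'cV[C]_n, 0 <= (adj v *m A *m v) 0 0.

Definition kron (C : numClosedFieldType) m1 n1 m2 n2
  (A : 'M[C]_(m1, n1)) (B : 'M[C]_(m2, n2)) : 'M[C]_(m1 * m2, n1 * n2) :=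
  \sum_(i < m1) \sum_(j < n1) \sum_(k < m2) \sum_(l < n2)
     (A i j * B k l) *: delta_mx (mxvec_index i k) (mxvec_index j l).

Definition ket (C : numClosedFieldType) (a b : 'I_2) : 'cV[C]_(2 * 2) :=
  delta_mx (mxvec_index a b) 0.

Definition q0 : 'I_2 := ord0.
Definition q1 : 'I_2 := ord_max.

Definition PhiP (C : numClosedFieldType) : 'cV[C]_(2 * 2) :=
  (sqrtC (2 : C))^-1 *: (ket C q0 q0 + ket C q1 q1).
Definition PhiM (C : numClosedFieldType) : 'cV[C]_(2 * 2) :=
  (sqrtC (2 : C))^-1 *: (ket C q0 q0 - ket C q1 q1).

Definition proj (C : numClosedFieldType) n (v : 'cV[C]_n) : 'M[C]_n := v *m adj v.

Definition unit_vec (C : numClosedFieldType) n (v : 'cV[C]_n) : Prop :=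
  (adj v *m v) 0 0 = 1.

Definition in_span2 (C : numClosedFieldType) n (u w v : 'cV[C]_n) : Prop :=
  exists a b : C, v = a *: u + b *: w.

Definition sigma1 (C : numClosedFieldType) (alpha : C) : 'M[C]_(2 * 2) :=
  alpha *: proj (PhiP C) + (1 - alpha) *: proj (ket C q0 q1).
Definition sigma2 (C : numClosedFieldType) (beta : C) : 'M[C]_(2 * 2) :=
  beta *: proj (PhiM C) + (1 - beta) *: proj (ket C q1 q0).

Definition pair2 (T : Type) (x y : T) : 'I_2 -> T :=
  fun i => if val i == 0%N then x else y.

Definition sep_op (C : numClosedFieldType) (M : 'M[C]_(2 * 2)) : Prop :=
  exists (N : nat) (A B : 'I_N -> 'M[C]_2),
    (forall r, psd (A r) /\ psd (B r)) /\ M = \sum_(r < N) kron (A r) (B r).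

Definition sep_perfect (C : numClosedFieldType) k (rho : 'I_k -> 'M[C]_(2 * 2)) : Prop :=
  exists Pi : 'I_k -> 'M[C]_(2 * 2),
    (\sum_(i < k) Pi i = 1%:M) /\ (forall i, sep_op (Pi i)) /\
    (forall i j, \tr (Pi i *m rho j) = (i == j)%:R).

(* ---------- (finite-round) LOCC protocols ----------
   A protocol is a finite tree: at each node Alice (resp. Bob) performs a
   local measurement with Kraus operators K_0..K_{m-1} on her (his) qubit,
   the outcome is broadcast, and the protocol continues; leaves announce
   the guess in 'I_k. *)
Inductive locc_tree (C : Type) (k : nat) : Type :=
| LLeaf : 'I_k -> locc_tree C k
| LAlice (m : nat) : ('I_m -> 'M[C]_2) -> ('I_m -> locc_tree C k) -> locc_tree C k
| LBob (m : nat) : ('I_m -> 'M[C]_2) -> ('I_m -> locc_tree C k) -> locc_tree C k.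

Fixpoint locc_wf (C : numClosedFieldType) k (t : locc_tree C k) : Prop :=
  match t with
  | LLeaf _ => True
  | LAlice m K nx => \sum_(j < m) adj (K j) *m K j = 1%:M /\ forall j, locc_wf (nx j)
  | LBob m K nx => \sum_(j < m) adj (K j) *m K j = 1%:M /\ forall j, locc_wf (nx j)
  end.

(* POVM element of outcome i implemented by the protocol *)
Fixpoint locc_effect (C : numClosedFieldType) k (t : locc_tree C k) (i : 'I_k)
  : 'M[C]_(2 * 2) :=
  match t with
  | LLeaf l => if l == i then 1%:M else 0
  | LAlice m K nx => \sum_(j < m)
      adj (kron (K j) (1%:M : 'M[C]_2)) *m locc_effect (nx j) i *m kron (K j) (1%:M : 'M[C]_2)
  | LBob m K nx => \sum_(j < m)
      adj (kron (1%:M : 'M[C]_2) (K j)) *m locc_effect (nx j) i *m kron (1%:M : 'M[C]_2) (K j)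
  end.

Definition locc_perfect (C : numClosedFieldType) k (rho : 'I_k -> 'M[C]_(2 * 2)) : Prop :=
  exists t : locc_tree C k, locc_wf t /\
    forall i j, \tr (locc_effect t i *m rho j) = (i == j)%:R.

(* Main.v *)
Require Import Defs.
From HB Require Import structures.
From mathcomp Require Import all_boot all_order all_algebra.
From mathcomp Require Import ring.
Set Implicit Arguments. Unset Strict Implicit. Unset Printing Implicit Defensive.
Import Order.TTheory GRing.Theory Num.Theory.
Local Open Scope ring_scope.

Section Kron.
Variable C : numClosedFieldType.

Lemma mxvec_index_eq m n (i i' : 'I_m) (j j' : 'I_n) :
  (mxvec_index i j == mxvec_index i' j') = (i == i') && (j == j').
Proof.
by rewrite /mxvec_index (inj_eq (@cast_ord_inj _ _ _)) (inj_eq enum_rank_inj) xpair_eqE.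
Qed.

Lemma kronE m1 n1 m2 n2 (A : 'M[C]_(m1, n1)) (B : 'M[C]_(m2, n2)) i j k l :
  kron A B (mxvec_index i k) (mxvec_index j l) = A i j * B k l.
Proof.
rewrite /kron summxE (bigD1 i) //= [X in _ + X]big1 ?addr0; last first.
  move=> i' /negPf ne; rewrite summxE big1 // => j' _; rewrite summxE big1 // => k' _.
  rewrite summxE big1 // => l' _; rewrite !mxE !mxvec_index_eq eq_sym ne /= mulr0 //.
rewrite summxE (bigD1 j) //= [X in _ + X]big1 ?addr0; last first.
  move=> j' /negPf ne; rewrite summxE big1 // => k' _.
  rewrite summxE big1 // => l' _; rewrite !mxE !mxvec_index_eq [j == _]eq_sym ne /= andbF mulr0 //.
rewrite summxE (bigD1 k) //= [X in _ + X]big1 ?addr0; last first.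
  move=> k' /negPf ne; rewrite summxE big1 // => l' _.
  rewrite !mxE !mxvec_index_eq [k == _]eq_sym ne /= andbF mulr0 //.
rewrite summxE (bigD1 l) //= [X in _ + X]big1 ?addr0; last first.
  move=> l' /negPf ne.
  rewrite !mxE !mxvec_index_eq [l == _]eq_sym ne /= !andbF mulr0 //.
by rewrite !mxE !mxvec_index_eq !eqxx mulr1.
Qed.

Lemma sum_mxvec m n (F : 'I_(m * n) -> C) :
  \sum_(r < m * n) F r = \sum_(a < m) \sum_(b < n) F (mxvec_index a b).
Proof.
rewrite (reindex _ (curry_mxvec_bij _ _)) /= pair_bigA /=.
by apply: eq_bigr => [[a b]].
Qed.

Lemma kron_mul m1 n1 p1 m2 n2 p2 (A : 'M[C]_(m1, n1)) (B : 'M[C]_(m2, n2))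
  (A' : 'M[C]_(n1, p1)) (B' : 'M[C]_(n2, p2)) :
  kron A B *m kron A' B' = kron (A *m A') (B *m B').
Proof.
apply/matrixP => x y; case/mxvec_indexP: x => i k; case/mxvec_indexP: y => j l.
rewrite mxE kronE !mxE sum_mxvec big_distrl /=; apply: eq_bigr => a _.
rewrite big_distrr /=; apply: eq_bigr => b _.
by rewrite !kronE mulrACA.
Qed.

Lemma adj_kron m1 n1 m2 n2 (A : 'M[C]_(m1, n1)) (B : 'M[C]_(m2, n2)) :
  adj (kron A B) = kron (adj A) (adj B).
Proof.
apply/matrixP => x y; case/mxvec_indexP: x => i k; case/mxvec_indexP: y => j l.
by rewrite kronE /adj !mxE kronE rmorphM.
Qed.

Lemma adj_mul m n p (A : 'M[C]_(m, n)) (B : 'M[C]_(n, p)) :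
  adj (A *m B) = adj B *m adj A.
Proof.
apply/matrixP => i j; rewrite /adj !mxE rmorph_sum; apply: eq_bigr => k _.
by rewrite !mxE rmorphM mulrC.
Qed.

Lemma hadjK m n (A : 'M[C]_(m, n)) : adj (adj A) = A.
Proof. by apply/matrixP => i j; rewrite /adj !mxE conjCK. Qed.

Lemma hadjD m n (A B : 'M[C]_(m, n)) : adj (A + B) = adj A + adj B.
Proof. by apply/matrixP => i j; rewrite /adj !mxE rmorphD. Qed.

Lemma hadjZ m n a (A : 'M[C]_(m, n)) : adj (a *: A) = a^* *: adj A.
Proof. by apply/matrixP => i j; rewrite /adj !mxE rmorphM. Qed.

Lemma adj_sum m n I (r : seq I) P (F : I -> 'M[C]_(m, n)) :
  adj (\sum_(i <- r | P i) F i) = \sum_(i <- r | P i) adj (F i).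
Proof.
apply/matrixP => i j; rewrite /adj !mxE !summxE rmorph_sum; apply: eq_bigr => k _.
by rewrite !mxE.
Qed.

Lemma adjI n : adj (1%:M : 'M[C]_n) = 1%:M.
Proof. by apply/matrixP => i j; rewrite /adj !mxE eq_sym rmorph_nat. Qed.

Lemma adjO m n : adj (0 : 'M[C]_(m, n)) = 0.
Proof. by apply/matrixP => i j; rewrite /adj !mxE rmorph0. Qed.

Lemma kron1 m n : kron (1%:M : 'M[C]_m) (1%:M : 'M[C]_n) = 1%:M.
Proof.
apply/matrixP => x y; case/mxvec_indexP: x => i k; case/mxvec_indexP: y => j l.
by rewrite kronE !mxE mxvec_index_eq -natrM mulnb.
Qed.

Lemma kronDl m1 n1 m2 n2 (A A' : 'M[C]_(m1, n1)) (B : 'M[C]_(m2, n2)) :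
  kron (A + A') B = kron A B + kron A' B.
Proof.
apply/matrixP => x y; case/mxvec_indexP: x => i k; case/mxvec_indexP: y => j l.
by rewrite mxE !kronE mxE mulrDl.
Qed.

Lemma kronDr m1 n1 m2 n2 (A : 'M[C]_(m1, n1)) (B B' : 'M[C]_(m2, n2)) :
  kron A (B + B') = kron A B + kron A B'.
Proof.
apply/matrixP => x y; case/mxvec_indexP: x => i k; case/mxvec_indexP: y => j l.
by rewrite mxE !kronE mxE mulrDr.
Qed.

Lemma kron_suml m1 n1 m2 n2 I (r : seq I) P (F : I -> 'M[C]_(m1, n1)) (B : 'M[C]_(m2, n2)) :
  kron (\sum_(i <- r | P i) F i) B = \sum_(i <- r | P i) kron (F i) B.
Proof.
apply/matrixP => x y; case/mxvec_indexP: x => i k; case/mxvec_indexP: y => j l.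
rewrite kronE !summxE big_distrl; apply: eq_bigr => a _.
by rewrite kronE.
Qed.

Lemma kron_sumr m1 n1 m2 n2 I (r : seq I) P (A : 'M[C]_(m1, n1)) (F : I -> 'M[C]_(m2, n2)) :
  kron A (\sum_(i <- r | P i) F i) = \sum_(i <- r | P i) kron A (F i).
Proof.
apply/matrixP => x y; case/mxvec_indexP: x => i k; case/mxvec_indexP: y => j l.
rewrite kronE !summxE big_distrr; apply: eq_bigr => a _.
by rewrite kronE.
Qed.

Lemma kron0l m1 n1 m2 n2 (B : 'M[C]_(m2, n2)) : kron (0 : 'M[C]_(m1, n1)) B = 0.
Proof.
apply/matrixP => x y; case/mxvec_indexP: x => i k; case/mxvec_indexP: y => j l.
by rewrite kronE !mxE mul0r.
Qed.

End Kron.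

Section Sep.
Variable C : numClosedFieldType.

Definition sepL (M : 'M[C]_(2 * 2)) : Prop :=
  exists s : seq ('M[C]_2 * 'M[C]_2),
    (forall p, p \in s -> psd p.1 /\ psd p.2) /\ M = \sum_(p <- s) kron p.1 p.2.

Lemma sepL_sep M : sepL M -> sep_op M.
Proof.
case=> s [Hs ->]; exists (size s), (fun r => (nth (0,0) s r).1), (fun r => (nth (0,0) s r).2).
split; first by move=> r; apply: Hs; apply: mem_nth.
by rewrite (big_nth (0,0)) big_mkord.
Qed.

Lemma sepL0 : sepL 0.
Proof. by exists [::]; split => //; rewrite big_nil. Qed.

Lemma sepLD M N : sepL M -> sepL N -> sepL (M + N).
Proof.
case=> s [Hs ->] [t [Ht ->]]; exists (s ++ t); split; last by rewrite big_cat.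
by move=> p; rewrite mem_cat => /orP[]; [apply: Hs | apply: Ht].
Qed.

Lemma psd1 : psd (1%:M : 'M[C]_2).
Proof.
split; first by apply: adjI.
move=> v; rewrite mulmx1 mxE; apply: sumr_ge0 => i _.
by rewrite /adj !mxE mulrC mul_conjC_ge0.
Qed.

Lemma sepL1 : sepL 1%:M.
Proof.
exists [:: (1%:M, 1%:M)]; split; first by move=> p; rewrite inE => /eqP -> /=; split; exact: psd1.
by rewrite big_seq1 kron1.
Qed.

Lemma psd_conj n (A : 'M[C]_n) (K : 'M[C]_n) : psd A -> psd (adj K *m A *m K).
Proof.
case=> hA pA; split; first by rewrite !adj_mul hadjK hA mulmxA.
move=> v; have := pA (K *m v); rewrite adj_mul !mulmxA //.
Qed.

Lemma sepL_alice M (K : 'M[C]_2) : sepL M ->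
  sepL (adj (kron K (1%:M : 'M[C]_2)) *m M *m kron K (1%:M : 'M[C]_2)).
Proof.
case=> s [Hs ->]; exists (map (fun p => (adj K *m p.1 *m K, p.2)) s); split.
  move=> p /mapP [q qs ->] /=; have [h1 h2] := Hs q qs; split => //; exact: psd_conj.
rewrite big_map -mulmxA mulmx_suml mulmx_sumr; apply: eq_bigr => p _.
by rewrite mulmxA adj_kron adjI !kron_mul mul1mx mulmx1.
Qed.

Lemma sepL_bob M (K : 'M[C]_2) : sepL M ->
  sepL (adj (kron (1%:M : 'M[C]_2) K) *m M *m kron (1%:M : 'M[C]_2) K).
Proof.
case=> s [Hs ->]; exists (map (fun p => (p.1, adj K *m p.2 *m K)) s); split.
  move=> p /mapP [q qs ->] /=; have [h1 h2] := Hs q qs; split => //; exact: psd_conj.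
rewrite big_map -mulmxA mulmx_suml mulmx_sumr; apply: eq_bigr => p _.
by rewrite mulmxA adj_kron adjI !kron_mul mul1mx mulmx1.
Qed.

Lemma sepL_sum m (F : 'I_m -> 'M[C]_(2*2)) : (forall j, sepL (F j)) -> sepL (\sum_(j < m) F j).
Proof. move=> H; apply: (big_ind sepL) => //; [exact: sepL0 | exact: sepLD]. Qed.

Lemma locc_sepL k (t : locc_tree C k) i : sepL (locc_effect t i).
Proof.
elim: t => [l | m K nx IH | m K nx IH] /=.
- by case: (l == i); [exact: sepL1 | exact: sepL0].
- by apply: sepL_sum => j; apply: sepL_alice.
- by apply: sepL_sum => j; apply: sepL_bob.
Qed.

Lemma locc_sum1 k (t : locc_tree C k) : locc_wf t -> \sum_(i < k) locc_effect t i = 1%:M.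
Proof.
elim: t => [l | m K nx IH | m K nx IH] /=.
- move=> _; rewrite (bigD1 l) //= eqxx big1 ?addr0 // => i /negPf.
  by rewrite eq_sym => ->.
- case=> hK hnx; rewrite exchange_big /=.
  transitivity (\sum_(j < m) kron (adj (K j) *m K j) (1%:M : 'M[C]_2)).
    apply: eq_bigr => j _; rewrite -mulmx_suml -mulmx_sumr IH // mulmx1.
    by rewrite adj_kron adjI kron_mul mulmx1.
  by rewrite -kron_suml hK kron1.
- case=> hK hnx; rewrite exchange_big /=.
  transitivity (\sum_(j < m) kron (1%:M : 'M[C]_2) (adj (K j) *m K j)).
    apply: eq_bigr => j _; rewrite -mulmx_suml -mulmx_sumr IH // mulmx1.
    by rewrite adj_kron adjI kron_mul mulmx1.
  by rewrite -kron_sumr hK kron1.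
Qed.

Lemma locc_sep k (rho : 'I_k -> 'M[C]_(2*2)) : locc_perfect rho -> sep_perfect rho.
Proof.
case=> t [wf H]; exists (locc_effect t); split; first exact: locc_sum1.
by split => // i; apply: sepL_sep; apply: locc_sepL.
Qed.

End Sep.

Section Psd.
Variable C : numClosedFieldType.

Lemma sum2 (V : nmodType) (F : 'I_2 -> V) : \sum_(i < 2) F i = F q0 + F q1.
Proof.
rewrite big_ord_recl big_ord1; congr (_ + F _); first by apply: val_inj.
Qed.

Lemma conjM (x y : C) : (x * y)^* = x^* * y^*.
Proof. exact: rmorphM. Qed.
Lemma conjN (x : C) : (- x)^* = - x^*.
Proof. exact: rmorphN. Qed.
Lemma conjD (x y : C) : (x + y)^* = x^* + y^*.
Proof. exact: rmorphD. Qed.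
Lemma conj1 : (1 : C)^* = 1.
Proof. exact: rmorph1. Qed.
Lemma conj0 : (0 : C)^* = 0.
Proof. exact: rmorph0. Qed.

Definition v2 (x y : C) : 'cV[C]_2 := \col_i (if i == q0 then x else y).

Lemma qf2 (A : 'M[C]_2) x y : (adj (v2 x y) *m A *m v2 x y) 0 0 =
  x^* * A q0 q0 * x + x^* * A q0 q1 * y + y^* * A q1 q0 * x + y^* * A q1 q1 * y.
Proof.
rewrite !mxE !sum2 !mxE !sum2 /adj !mxE /=; ring.
Qed.

Lemma psd_herm (A : 'M[C]_2) : psd A -> A q1 q0 = (A q0 q1)^*.
Proof. by case=> h _; rewrite -{1}h /adj !mxE. Qed.

Lemma psd_diag0 (A : 'M[C]_2) : psd A -> 0 <= A q0 q0.
Proof. by case=> _ h; have := h (v2 1 0); rewrite qf2 rmorph1 rmorph0; rewrite !(mul0r, mulr0, mul1r, mulr1, addr0). Qed.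

Lemma psd_diag1 (A : 'M[C]_2) : psd A -> 0 <= A q1 q1.
Proof. by case=> _ h; have := h (v2 0 1); rewrite qf2 rmorph1 rmorph0; rewrite !(mul0r, mulr0, mul1r, mulr1, add0r). Qed.

Lemma psd_off (A : 'M[C]_2) : psd A -> A q1 q1 = 0 -> A q0 q1 = 0.
Proof.
move=> pA h11; have h00 := psd_diag0 pA; have hh := psd_herm pA.
set a := A q0 q1 in hh *; set d := A q0 q0 in h00 *.
set k := (d + 1)^-1.
have kp : 0 < k by rewrite invr_gt0 ltr_wpDl.
have kr : k^* = k by apply: conj_Creal; apply: gtr0_real.
have := pA.2 (v2 (- (k * a)) 1); rewrite qf2 h11 hh !conjN conjM kr conj1 -/a -/d.
have -> : - (k * a^*) * d * - (k * a) + - (k * a^*) * a * 1 + 1 * a^* * - (k * a) + 1 * 0 * 1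
   = - (k * (a * a^*) * (2 - k * d)) by ring.
rewrite oppr_ge0 => H.
have kd : k * d <= 1.
  by rewrite mulrC ler_pdivrMr ?ltr_wpDl // mul1r lerDl.
have pos : 0 < 2 - k * d.
  by rewrite subr_gt0 (le_lt_trans kd) // ltr1n.
have : k * (a * a^*) <= 0 by rewrite -(pmulr_rle0 _ pos) mulrC.
rewrite (pmulr_rle0 _ kp) => H2.
have : a * a^* == 0 by rewrite eq_le H2 mul_conjC_ge0.
by rewrite mul_conjC_eq0 => /eqP.
Qed.

Lemma psd_det (A : 'M[C]_2) : psd A -> A q0 q1 * (A q0 q1)^* <= A q0 q0 * A q1 q1.
Proof.
move=> pA; have h00 := psd_diag0 pA; have h11 := psd_diag1 pA; have hh := psd_herm pA.
have [e|lt] := eqVneq (A q1 q1) 0.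
  by rewrite (psd_off pA e) mul0r e mulr0.
have p11 : 0 < A q1 q1 by rewrite lt_def lt h11.
have := pA.2 (v2 (A q1 q1) (- (A q1 q0))); rewrite qf2 hh !conjN conjCK.
rewrite (conj_Creal (ger0_real h11)).
set a := A q0 q1; set d := A q0 q0; set e := A q1 q1.
have -> : e * d * e + e * a * - a^* + - a * a^* * e + - a * e * - a^*
   = e * (d * e - a * a^*) by ring.
by rewrite pmulr_rge0 // subr_ge0.
Qed.

Lemma amgm (a0 a1 b0 b1 x y : C) : 0 <= a0 -> 0 <= a1 -> 0 <= b0 -> 0 <= b1 ->
  x * x^* <= a0 * a1 -> y * y^* <= b0 * b1 ->
  (x * y) + (x * y)^* <= a0 * b0 + a1 * b1.
Proof.
move=> ha0 ha1 hb0 hb1 hx hy.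
set z := x * y.
have re : z + z^* = 2 * 'Re z by rewrite ReE mulrC divfK // pnatr_eq0.
have rez : 'Re z <= `|z| := (leif_Re_Creal z).1.
rewrite re; apply: (le_trans (y := 2 * `|z|)).
  by apply: ler_wpM2l; rewrite ?ler0n.
have s0 : 0 <= a0 * b0 + a1 * b1 by rewrite addr_ge0 ?mulr_ge0.
rewrite -ler_sqr ?nnegrE ?mulr_ge0 ?ler0n //.
have nz : `|z| ^+ 2 <= a0 * a1 * (b0 * b1).
  rewrite normCK /z rmorphM mulrACA; apply: ler_pM => //; exact: mul_conjC_ge0.
have r : a0 * b0 - a1 * b1 \is Num.real by rewrite realB ?ger0_real ?mulr_ge0.
rewrite realEsqr in r.
apply: (le_trans (y := 4 * (a0 * a1 * (b0 * b1)))).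
  rewrite exprMn (_ : (2:C) ^+ 2 = 4); last by rewrite expr2 -natrM.
  by apply: ler_wpM2l; rewrite ?ler0n.
rewrite -subr_ge0; have -> : (a0 * b0 + a1 * b1) ^+ 2 - 4 * (a0 * a1 * (b0 * b1))
   = (a0 * b0 - a1 * b1) ^+ 2 by ring.
exact: r.
Qed.

Lemma kron_phi_ge0 (A B : 'M[C]_2) (s : C) : psd A -> psd B -> (s = 1 \/ s = -1) ->
  0 <= A q0 q0 * B q0 q0 + A q1 q1 * B q1 q1
       + s * (A q0 q1 * B q0 q1 + A q1 q0 * B q1 q0).
Proof.
move=> pA pB hs; rewrite (psd_herm pA) (psd_herm pB).
have dA := psd_det pA.
case: hs => ->.
  have dA' : (- A q0 q1) * (- A q0 q1)^* <= A q0 q0 * A q1 q1 by rewrite conjN mulrNN.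
  have := amgm (psd_diag0 pA) (psd_diag1 pA) (psd_diag0 pB) (psd_diag1 pB) dA' (psd_det pB).
  rewrite mulNr conjN conjM -opprD => H.
  by rewrite mul1r -[X in _ + X]opprK subr_ge0.
have := amgm (psd_diag0 pA) (psd_diag1 pA) (psd_diag0 pB) (psd_diag1 pB) dA (psd_det pB).
by rewrite conjM mulN1r subr_ge0.
Qed.

End Psd.

Section Q.
Variable C : numClosedFieldType.

Lemma tr_proj n (X : 'M[C]_n) v : \tr (X *m proj v) = (adj v *m X *m v) 0 0.
Proof. by rewrite /proj mulmxA mxtrace_mulC mulmxA trace_mx11. Qed.

Lemma adj_delta n (x : 'I_n) : adj (delta_mx x (0 : 'I_1)) = delta_mx 0 x :> 'M[C]_(1, n).
Proof.
apply/matrixP => i j; rewrite /adj !mxE ord1 eqxx andbT andTb.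
by case: (j == x); rewrite ?rmorph1 ?rmorph0.
Qed.

Lemma qf_delta n (X : 'M[C]_n) x y :
  (adj (delta_mx x (0 : 'I_1)) *m X *m delta_mx y (0 : 'I_1)) 0 0 = X x y.
Proof. by rewrite adj_delta -rowE -colE !mxE. Qed.

Definition qf n (X : 'M[C]_n) (u w : 'cV[C]_n) := (adj u *m X *m w) 0 0.

Lemma qf_lin n (X : 'M[C]_n) (u w : 'cV[C]_n) a b :
  qf X (a *: u + b *: w) (a *: u + b *: w) =
  a^* * a * qf X u u + a^* * b * qf X u w + b^* * a * qf X w u + b^* * b * qf X w w.
Proof.
rewrite /qf hadjD !hadjZ !mulmxDl !mulmxDr -!scalemxAl -!scalemxAr !mxE; ring.
Qed.

Lemma qf_ket (X : 'M[C]_(2 * 2)) a b c d :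
  qf X (ket C a b) (ket C c d) = X (mxvec_index a b) (mxvec_index c d).
Proof. exact: qf_delta. Qed.

Definition s2 : C := (sqrtC (2 : C))^-1.

Lemma s2_pos : 0 < s2^* * s2.
Proof.
rewrite mulrC mul_conjC_gt0 invr_eq0 sqrtC_eq0 pnatr_eq0 //.
Qed.

Lemma tr_sigma2 (A B : 'M[C]_2) beta :
  \tr (kron A B *m sigma2 beta) =
  beta * (s2^* * s2 * (A q0 q0 * B q0 q0 + A q1 q1 * B q1 q1
       + (-1) * (A q0 q1 * B q0 q1 + A q1 q0 * B q1 q0)))
  + (1 - beta) * (A q1 q1 * B q0 q0).
Proof.
rewrite /sigma2 mulmxDr -!scalemxAr mxtraceD !mxtraceZ !tr_proj.
rewrite /PhiM -/s2 scalerBr -scaleNr.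
rewrite -/(qf _ _ _) qf_lin -!/(qf _ _ _) !qf_ket !kronE conjN; ring.
Qed.

Lemma tr_sigma1 (A B : 'M[C]_2) alpha :
  \tr (kron A B *m sigma1 alpha) =
  alpha * (s2^* * s2 * (A q0 q0 * B q0 q0 + A q1 q1 * B q1 q1
       + 1 * (A q0 q1 * B q0 q1 + A q1 q0 * B q1 q0)))
  + (1 - alpha) * (A q0 q0 * B q1 q1).
Proof.
rewrite /sigma1 mulmxDr -!scalemxAr mxtraceD !mxtraceZ !tr_proj.
rewrite /PhiP -/s2 scalerDr.
rewrite -/(qf _ _ _) qf_lin -!/(qf _ _ _) !qf_ket !kronE; ring.
Qed.

End Q.

Section R.
Variable C : numClosedFieldType.

Lemma sep_zero2 (M : 'M[C]_(2*2)) (beta : C) : 0 < beta < 1 -> sep_op M ->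
  \tr (M *m sigma2 beta) = 0 -> M (mxvec_index q0 q0) (mxvec_index q0 q0) = 0.
Proof.
case/andP=> b0 b1 [N [A [B [hp ->]]]] htr.
rewrite mulmx_suml raddf_sum in htr.
have c0 := @s2_pos C.
have nb : 1 - beta != 0 by rewrite subr_eq0 eq_sym lt_eqF.
have nb0 : beta != 0 by rewrite gt_eqF.
have {}htr : \sum_(r < N) \tr (kron (A r) (B r) *m sigma2 beta) = 0 := htr.
have Hge : forall r, 0 <= \tr (kron (A r) (B r) *m sigma2 beta).
  move=> r; have [pA pB] := hp r; rewrite tr_sigma2.
  apply: addr_ge0; apply: mulr_ge0.
  - exact: ltW.
  - by apply: mulr_ge0; [exact: ltW c0 | apply: kron_phi_ge0 => //; right].
  - by rewrite subr_ge0 ltW.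
  - by apply: mulr_ge0; [apply: psd_diag1 | apply: psd_diag0].
rewrite summxE; apply: big1 => r _; rewrite kronE.
have [pA pB] := hp r.
have := psumr_eq0P (fun i _ => Hge i) htr => /(_ r isT).
rewrite tr_sigma2 => /eqP; rewrite paddr_eq0; last first.
- apply: mulr_ge0; first by rewrite subr_ge0 ltW.
  by apply: mulr_ge0; [apply: psd_diag1 | apply: psd_diag0].
- apply: mulr_ge0; first exact: ltW.
  by apply: mulr_ge0; [exact: ltW c0 | apply: kron_phi_ge0 => //; right].
case/andP => h1; rewrite mulf_eq0 (negbTE nb) /= mulf_eq0 => /orP[/eqP a11 | /eqP ->]; last first.
  by rewrite mulr0.
have a01 := psd_off pA a11; have a10 := psd_herm pA; rewrite a01 conj0 in a10.
move: h1; rewrite a11 a01 a10 !(mul0r, mulr0, addr0, add0r) mulf_eq0 (negbTE nb0) /=.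
by rewrite mulf_eq0 (negbTE (lt0r_neq0 c0)) /= => /eqP.
Qed.

Lemma sep_zero1 (M : 'M[C]_(2*2)) (alpha : C) : 0 < alpha < 1 -> sep_op M ->
  \tr (M *m sigma1 alpha) = 0 -> M (mxvec_index q0 q0) (mxvec_index q0 q0) = 0.
Proof.
case/andP=> b0 b1 [N [A [B [hp ->]]]] htr.
rewrite mulmx_suml raddf_sum in htr.
have c0 := @s2_pos C.
have nb : 1 - alpha != 0 by rewrite subr_eq0 eq_sym lt_eqF.
have nb0 : alpha != 0 by rewrite gt_eqF.
have {}htr : \sum_(r < N) \tr (kron (A r) (B r) *m sigma1 alpha) = 0 := htr.
have Hge : forall r, 0 <= \tr (kron (A r) (B r) *m sigma1 alpha).
  move=> r; have [pA pB] := hp r; rewrite tr_sigma1.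
  apply: addr_ge0; apply: mulr_ge0.
  - exact: ltW.
  - by apply: mulr_ge0; [exact: ltW c0 | apply: kron_phi_ge0 => //; left].
  - by rewrite subr_ge0 ltW.
  - by apply: mulr_ge0; [apply: psd_diag0 | apply: psd_diag1].
rewrite summxE; apply: big1 => r _; rewrite kronE.
have [pA pB] := hp r.
have := psumr_eq0P (fun i _ => Hge i) htr => /(_ r isT).
rewrite tr_sigma1 => /eqP; rewrite paddr_eq0; last first.
- apply: mulr_ge0; first by rewrite subr_ge0 ltW.
  by apply: mulr_ge0; [apply: psd_diag0 | apply: psd_diag1].
- apply: mulr_ge0; first exact: ltW.
  by apply: mulr_ge0; [exact: ltW c0 | apply: kron_phi_ge0 => //; left].
case/andP => h1; rewrite mulf_eq0 (negbTE nb) /= mulf_eq0 => /orP[/eqP -> | /eqP b11].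
  by rewrite mul0r.
have b01 := psd_off pB b11; have b10 := psd_herm pB; rewrite b01 conj0 in b10.
move: h1; rewrite b11 b01 b10 !(mul0r, mulr0, addr0, add0r) mulf_eq0 (negbTE nb0) /=.
by rewrite mulf_eq0 (negbTE (lt0r_neq0 c0)) /= => /eqP.
Qed.

Lemma part3 (alpha beta : C) : 0 < alpha < 1 -> 0 < beta < 1 ->
  ~ sep_perfect (pair2 (sigma1 alpha) (sigma2 beta)).
Proof.
move=> ha hb [Pi [hsum [hsep htr]]].
have h0 := sep_zero2 hb (hsep q0) (htr q0 q1).
have h1 := sep_zero1 ha (hsep q1) (htr q1 q0).
have := congr1 (fun M : 'M[C]_(2 * 2) => M (mxvec_index q0 q0) (mxvec_index q0 q0)) hsum.
rewrite /= summxE sum2 h0 h1 addr0 mxE eqxx => /eqP.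
by rewrite eq_sym oner_eq0.
Qed.

End R.

Section L.
Variable C : numClosedFieldType.

Lemma e_dot n (j : 'I_n) : adj (delta_mx j (0 : 'I_1)) *m delta_mx j 0 = 1%:M :> 'M[C]_1.
Proof.
rewrite adj_delta mul_delta_mx; apply/matrixP => a b; rewrite !ord1 !mxE.
by rewrite eqxx.
Qed.

Definition ktree (w : 'I_2 -> 'cV[C]_2) (u : 'I_2 -> 'I_2 -> 'cV[C]_2) : locc_tree C 2 :=
  LAlice (fun j => delta_mx j (0 : 'I_1) *m adj (w j))
    (fun j => LBob (fun l => delta_mx l (0 : 'I_1) *m adj (u j l)) (fun l => LLeaf C l)).

Lemma ktree_wf w u : \sum_j w j *m adj (w j) = 1%:M ->
  (forall j, \sum_l u j l *m adj (u j l) = 1%:M) -> locc_wf (ktree w u).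
Proof.
move=> hw hu /=; split.
  rewrite -hw; apply: eq_bigr => j _.
  by rewrite adj_mul hadjK -mulmxA (mulmxA (adj _)) e_dot mul1mx.
move=> j; split => // .
rewrite -(hu j); apply: eq_bigr => l _.
by rewrite adj_mul hadjK -mulmxA (mulmxA (adj _)) e_dot mul1mx.
Qed.

Lemma ktree_effect w u i :
  locc_effect (ktree w u) i =
  \sum_j kron (w j) (u j i) *m adj (kron (w j) (u j i)).
Proof.
rewrite /=; apply: eq_bigr => j _.
rewrite (bigD1 i) //= eqxx big1 ?addr0; last first.
  by move=> l /negPf; rewrite eq_sym => ->; rewrite mulmx0 mul0mx.
rewrite mulmx1 !adj_kron !adjI !mulmxA !kron_mul !mul1mx !mulmx1.
rewrite !adj_mul !hadjK.
by rewrite !mulmxA -!(mulmxA _ (adj (delta_mx _ _))) !e_dot !mulmx1.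
Qed.

Lemma locc_from_bases (rho : 'I_2 -> 'M[C]_(2 * 2)) (psi : 'I_2 -> 'cV[C]_(2 * 2))
  (w : 'I_2 -> 'cV[C]_2) (u : 'I_2 -> 'I_2 -> 'cV[C]_2) :
  (forall k, rho k = proj (psi k)) ->
  \sum_j w j *m adj (w j) = 1%:M ->
  (forall j, \sum_l u j l *m adj (u j l) = 1%:M) ->
  (forall k, unit_vec (psi k)) ->
  (forall j i k, i != k -> adj (kron (w j) (u j i)) *m psi k = 0) ->
  locc_perfect rho.
Proof.
move=> hrho hw hu hunit horth.
have wf := ktree_wf hw hu.
exists (ktree w u); split => //.
have H0 : forall i k, i != k -> \tr (locc_effect (ktree w u) i *m rho k) = 0.
  move=> i k ne; rewrite hrho tr_proj ktree_effect mulmx_sumr mulmx_suml summxE.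
  apply: big1 => j _.
  by rewrite !mulmxA -mulmxA (horth j i k ne) mulmx0 mxE.
have hs := locc_sum1 wf.
move: (locc_effect (ktree w u)) H0 hs => E H0 hs.
move=> i k; have [<-|ne] := eqVneq i k; last by rewrite H0.
have := congr1 (fun M : 'M[C]_(2 * 2) => \tr (M *m rho i)) hs.
rewrite (bigD1 i) // mulmxDl mxtraceD mulmx_suml raddf_sum.
rewrite big1 ?addr0; last by move=> l ne; exact (H0 l i ne).
by move=> ->; rewrite hrho tr_proj mulmx1 hunit.
Qed.

End L.

Section A.
Variable C : numClosedFieldType.

Lemma ord2P (i : 'I_2) : (i = q0) \/ (i = q1).
Proof.
case: i => [[|[|n]] Hi]; [left | right | by []]; by apply: val_inj.
Qed.

Definition inner2 (x y : 'cV[C]_2) := \sum_b (x b 0)^* * y b 0.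
Definition perp (z : 'cV[C]_2) : 'cV[C]_2 := v2 (- (z q1 0)^*) ((z q0 0)^*).
Definition nrm (z : 'cV[C]_2) := inner2 z z.
Definition normz (z : 'cV[C]_2) := (sqrtC (nrm z))^-1 *: z.
Definition bobvec (w : 'cV[C]_2) (psi : 'cV[C]_(2 * 2)) : 'cV[C]_2 :=
  \col_b \sum_a (w a 0)^* * psi (mxvec_index a b) 0.

Lemma v2E (x y : C) : (v2 x y q0 0 = x) * (v2 x y q1 0 = y).
Proof. by rewrite !mxE. Qed.

Lemma v2_eta (z : 'cV[C]_2) : z = v2 (z q0 0) (z q1 0).
Proof.
apply/matrixP => i j; rewrite !ord1 mxE; case: (ord2P i) => -> //.
Qed.

Lemma inner2E x y : inner2 x y = (x q0 0)^* * y q0 0 + (x q1 0)^* * y q1 0.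
Proof. by rewrite /inner2 sum2. Qed.

Lemma inner2Zl (c : C) x y : inner2 (c *: x) y = c^* * inner2 x y.
Proof. by rewrite !inner2E !mxE conjM; ring. Qed.

Lemma inner2_perp x : inner2 (perp x) x = 0.
Proof. by rewrite inner2E !mxE /= conjN !conjCK; ring. Qed.

Lemma inner2_0 x : inner2 x 0 = 0.
Proof. by rewrite inner2E !mxE !mulr0 addr0. Qed.

Lemma perpZ (c : C) x : perp (c *: x) = c^* *: perp x.
Proof.
apply/matrixP => i j; rewrite !ord1 !mxE; case: (ord2P i) => -> /=; rewrite conjM ?mulrN //.
Qed.

Lemma nrm_ge0 z : 0 <= nrm z.
Proof. by rewrite /nrm inner2E addr_ge0 // mulrC mul_conjC_ge0. Qed.

Lemma nrm_eq0 z : nrm z = 0 -> z = 0.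
Proof.
rewrite /nrm inner2E => /eqP; rewrite paddr_eq0 ?(mulrC (_^*)) ?mul_conjC_ge0 //.
rewrite !mul_conjC_eq0 => /andP[/eqP h0 /eqP h1].
by rewrite (v2_eta z) h0 h1; apply/matrixP => i j; rewrite !mxE; case: (_ == _).
Qed.

Lemma nrm_normz z : z != 0 -> nrm (normz z) = 1.
Proof.
move=> nz; have n0 : nrm z != 0 by apply/eqP => /nrm_eq0; apply/eqP.
have ge := nrm_ge0 z.
rewrite /nrm /normz inner2Zl [inner2 _ _]inner2E !mxE -/(inner2 z z) -/(nrm z).
have r : (sqrtC (nrm z))^-1 \is Num.real by rewrite realV sqrtC_real.
rewrite (conj_Creal r).
set k := (sqrtC (nrm z))^-1.
have -> : k * ((z q0 0)^* * (k * z q0 0) + (z q1 0)^* * (k * z q1 0)) = k ^+ 2 * nrm z.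
  by rewrite /nrm inner2E; ring.
rewrite /k.
by rewrite exprVn sqrtCK mulVf.
Qed.

Lemma onb y : nrm y = 1 -> y *m adj y + perp y *m adj (perp y) = 1%:M.
Proof.
rewrite /nrm inner2E => h.
apply/matrixP => i j; rewrite !mxE !big_ord1 /adj !mxE.
case: (ord2P i) => ->; case: (ord2P j) => -> /=; rewrite ?mxE /= ?conjN ?conjCK.
all: have e0 : (ord0 : 'I_1) = 0 by apply: val_inj.
all: rewrite ?e0.
- by rewrite -h; ring.
- ring.
- ring.
- by rewrite -h; ring.
Qed.

Lemma perp_eq0 z : perp z = 0 -> z = 0.
Proof.
move=> h; have h0 := congr1 (fun m : 'cV[C]_2 => m q0 0) h.
have h1 := congr1 (fun m : 'cV[C]_2 => m q1 0) h.
move: h0 h1; rewrite /= !mxE /= => /eqP; rewrite oppr_eq0 conjC_eq0 => /eqP h0 /eqP.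
rewrite conjC_eq0 => /eqP h1.
by rewrite (v2_eta z) h0 h1; apply/matrixP => i j; rewrite !mxE; case: (_ == _).
Qed.

Lemma bob_lemma (v1 v2' : 'cV[C]_2) : inner2 v1 v2' = 0 ->
  exists u0 u1 : 'cV[C]_2, u0 *m adj u0 + u1 *m adj u1 = 1%:M /\
    inner2 u1 v1 = 0 /\ inner2 u0 v2' = 0.
Proof.
move=> h.
pose z0 := if v1 == 0 then perp v2' else v1.
pose z := if z0 == 0 then v2 1 0 else z0.
have nz : z != 0.
  rewrite /z; have [_|n0] := eqVneq z0 0; last exact: n0.
  apply/eqP => e.
  have := congr1 (fun m : 'cV[C]_2 => m q0 0) e; rewrite /= !mxE /=.
  by move/eqP; rewrite oner_eq0.
exists (normz z), (perp (normz z)); split; first by apply: onb; apply: nrm_normz.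
rewrite /normz perpZ !inner2Zl; split.
  have [->|n1] := eqVneq v1 0; first by rewrite inner2_0 mulr0.
  by rewrite /z /z0 (negbTE n1) (negbTE n1) inner2_perp mulr0.
have [e1|n1] := eqVneq v1 0.
  rewrite /z /z0 e1 eqxx; case: eqP => [/perp_eq0 ->|_].
    by rewrite inner2_0 mulr0.
  by rewrite inner2_perp mulr0.
by rewrite /z /z0 (negbTE n1) (negbTE n1) h mulr0.
Qed.

End A.

Section M.
Variable C : numClosedFieldType.

Lemma contract (w u : 'cV[C]_2) (psi : 'cV[C]_(2 * 2)) :
  inner2 u (bobvec w psi) = 0 -> adj (kron w u) *m psi = 0.
Proof.
move=> H; apply/matrixP => x y; rewrite (ord1 y); case/mxvec_indexP: x => i k.
rewrite [RHS]mxE mxE sum_mxvec -[RHS]H /inner2 exchange_big; apply: eq_bigr => b _.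
rewrite mxE big_distrr; apply: eq_bigr => a _.
rewrite /adj !mxE kronE conjM !ord1.
by rewrite /= mulrCA mulrA.
Qed.

Variables a b c d : C.
Definition psi1 := a *: PhiP C + b *: ket C q0 q1.
Definition psi2 := c *: PhiM C + d *: ket C q1 q0.

Lemma bob1 (w : 'cV[C]_2) : bobvec w psi1 =
  v2 ((w q0 0)^* * (a * s2 C)) ((w q0 0)^* * b + (w q1 0)^* * (a * s2 C)).
Proof.
apply/matrixP => i j; rewrite (ord1 j); case: (ord2P i) => ->;
rewrite !mxE sum2 /psi1 /PhiP /ket -/(s2 C) !mxE !mxvec_index_eq /=; ring.
Qed.

Lemma bob2 (w : 'cV[C]_2) : bobvec w psi2 =
  v2 ((w q0 0)^* * (c * s2 C) + (w q1 0)^* * d) (- (w q1 0)^* * (c * s2 C)).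
Proof.
apply/matrixP => i j; rewrite (ord1 j); case: (ord2P i) => ->;
rewrite !mxE sum2 /psi2 /PhiM /ket -/(s2 C) !mxE !mxvec_index_eq /=; ring.
Qed.

Definition fq (p q : C) (w : 'cV[C]_2) :=
  p * (w q0 0 * (w q0 0)^* - w q1 0 * (w q1 0)^*) + w q0 0 * (w q1 0)^* * q.

Lemma fA (w : 'cV[C]_2) : inner2 (bobvec w psi1) (bobvec w psi2) =
  fq ((a * s2 C)^* * (c * s2 C)) ((a * s2 C)^* * d - b^* * (c * s2 C)) w.
Proof. by rewrite bob1 bob2 inner2E !v2E /fq !(conjD, conjN, conjM, conjCK); ring. Qed.

End M.

Section Al.
Variable C : numClosedFieldType.

Lemma fqZ (p q k : C) w : fq p q (k *: w) = k * k^* * fq p q w.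
Proof. by rewrite /fq !mxE !conjM; ring. Qed.

Lemma fq_perp (p q : C) w : fq p q (perp w) = - fq p q w.
Proof. by rewrite /fq /perp !v2E !conjN !conjCK; ring. Qed.

Lemma alice (p q : C) : exists w0 : 'cV[C]_2, nrm w0 = 1 /\ fq p q w0 = 0.
Proof.
have hP : 0 <= p * p^* := mul_conjC_ge0 p.
have hQ : 0 <= q * q^* := mul_conjC_ge0 q.
set S := sqrtC ((q * q^*) ^+ 2 + 4 * (p * p^*) * (q * q^*)).
have hS2 : S ^+ 2 = (q * q^*) ^+ 2 + 4 * (p * p^*) * (q * q^*) by rewrite sqrtCK.
have hS : 0 <= S.
  rewrite sqrtC_ge0; apply: addr_ge0; first exact: exprn_ge0.
  by apply: mulr_ge0 => //; apply: mulr_ge0 => //; apply: ler0n.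
have hT : (q * q^* + S)^* = q * q^* + S by apply: conj_Creal; apply: ger0_real; apply: addr_ge0.
have c2 : (2 : C)^* = 2 := conj_Creal (ger0_real (ler0n _ 2)).
pose zc := v2 (2 * (p * p^*) * q^*) (p^* * (q * q^* + S)).
have fz : fq p q zc = 0.
  have e1 : (2 * (p * p^*) * q^*)^* = 2 * (p * p^*) * q by rewrite !conjM !conjCK c2; ring.
  have e2 : (p^* * (q * q^* + S))^* = p * (q * q^* + S) by rewrite conjM conjCK hT.
  rewrite /fq /zc !v2E e1 e2.
  have -> : p * (2 * (p * p^*) * q^* * (2 * (p * p^*) * q) -
     p^* * (q * q^* + S) * (p * (q * q^* + S))) +
     2 * (p * p^*) * q^* * (p * (q * q^* + S)) * q
     = p * (p * p^*) * (4 * (p * p^*) * (q * q^*) + (q * q^*) ^+ 2 - S ^+ 2) by ring.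
  by rewrite hS2; ring.
have [nz|ez] := eqVneq zc 0; last first.
  exists (normz zc); split; first exact: nrm_normz.
  by rewrite /normz fqZ fz mulr0.
have [p0|pn] := eqVneq p 0.
  exists (v2 1 0); split.
    by rewrite /nrm inner2E !v2E conj1 conj0; ring.
  by rewrite /fq !v2E p0 conj0; ring.
have q0' : q = 0.
  have := congr1 (fun m : 'cV[C]_2 => m q0 0) nz; rewrite /zc v2E mxE /= => /eqP.
  rewrite !mulf_eq0 pnatr_eq0 /=.
  by rewrite (negbTE pn) !conjC_eq0 (negbTE pn) /= => /eqP.
have n11 : v2 (1 : C) 1 != 0.
  apply/eqP => e; have := congr1 (fun m : 'cV[C]_2 => m q0 0) e; rewrite v2E mxE /=.
  by move/eqP; rewrite oner_eq0.
exists (normz (v2 1 1)); split; first exact: nrm_normz.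
by rewrite /normz fqZ /fq !v2E q0' conj1; ring.
Qed.

End Al.

Lemma part1 (C : numClosedFieldType) (phi1 phi2 : 'cV[C]_(2 * 2)) :
  in_span2 (PhiP C) (ket C q0 q1) phi1 ->
  in_span2 (PhiM C) (ket C q1 q0) phi2 ->
  unit_vec phi1 -> unit_vec phi2 ->
  locc_perfect (pair2 (proj phi1) (proj phi2)).
Proof.
move=> [a [b e1]] [c [d e2]] un1 un2.
have E1 : phi1 = psi1 a b by [].
have E2 : phi2 = psi2 c d by [].
have [w0 [n0 f0]] := alice ((a * s2 C)^* * (c * s2 C)) ((a * s2 C)^* * d - b^* * (c * s2 C)).
have f1 := fq_perp ((a * s2 C)^* * (c * s2 C)) ((a * s2 C)^* * d - b^* * (c * s2 C)) w0.
rewrite f0 oppr0 in f1.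
have [u00 [u01 [hu0 [o01 o00]]]] := bob_lemma (etrans (fA a b c d w0) f0).
have [u10 [u11 [hu1 [o11 o10]]]] := bob_lemma (etrans (fA a b c d (perp w0)) f1).
apply: (@locc_from_bases C _ (pair2 phi1 phi2) (fun j => if j == q0 then w0 else perp w0)
   (fun j l => if j == q0 then (if l == q0 then u00 else u01) else (if l == q0 then u10 else u11))).
- by move=> k; case: (ord2P k) => ->.
- by rewrite sum2 /=; apply: onb.
- by move=> j; rewrite sum2; case: (ord2P j) => -> /=.
- by move=> k; case: (ord2P k) => ->.
- move=> j i k; case: (ord2P j) => ->; case: (ord2P i) => ->; case: (ord2P k) => -> //= _;
  apply: contract; rewrite ?E1 ?E2 //.
Qed.

Unset Implicit Arguments.

Theorem mainTheorem5 (C : numClosedFieldType) (alpha beta : C)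
  (halpha : 0 < alpha < 1) (hbeta : 0 < beta < 1) :
  (forall psi1 psi2 : 'cV[C]_(2 * 2),
      in_span2 (PhiP C) (ket C q0 q1) psi1 ->
      in_span2 (PhiM C) (ket C q1 q0) psi2 ->
      unit_vec psi1 -> unit_vec psi2 ->
      locc_perfect (pair2 (proj psi1) (proj psi2)))
  /\ ~ locc_perfect (pair2 (sigma1 alpha) (sigma2 beta))
  /\ ~ sep_perfect (pair2 (sigma1 alpha) (sigma2 beta)).
Proof.
split; first exact: part1.
have h3 := part3 halpha hbeta.
by split => // /locc_sep.
Qed.
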